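(* Let $C$ be a cycle on vertices $0,1,\dots,n-1$ (in clockwise order), let $\mathcal H$ be a family of at least three pairwise distinct runs of $C$ that is strict-containment free, and let $\mathcal K$ be a family of vertex subsets of $C$ such that $(C,\mathcal H)$ and $(C,\mathcal K)$ are $axax$-free. Let $C(\mathcal H)$ be the cycle on $\mathcal H$ in lex. cyclic order. Then there is an outerplanar graph $Q$ on vertex set $\mathcal H$ that contains $C(\mathcal H)$, has an outerplanar embedding whose outer face is bounded by $C(\mathcal H)$, and such that for every $K\in\mathcal K$ the set $\{H\in\mathcal H: H\cap K\ne\emptyset\}$ induces a connected subgraph of $Q$.
   Context: Indices are taken mod $n$. A run is a vertex set of the form $\mathrm{arc}[i,j]=\{i,i+1,\dots,j\}$ (consecutive vertices in clockwise order) that is a nonempty proper subset of $V(C)$; for such a run $R$ write $s(R)=i$, $t(R)=j$. A run $R$ is strictly contained in a run $R'$ if $R\subseteq R'$ and, traversing $C$ clockwise starting from $s(R')$, one meets $s(R')$ strictly before $s(R)$ and $t(R)$ strictly before $t(R')$ (i.e. $R'$ extends beyond $R$ at both ends). A family of runs is strict-containment free if no member is strictly contained in another. Lex. cyclic order: traverse $C$ clockwise from some fixed starting vertex; on visiting a vertex $v$, list all $R\in\mathcal H$ with $s(R)=v$, ordered by increasing clockwise distance from $v$ to $t(R)$ (ties broken arbitrarily); $C(\mathcal H)$ is the cycle through the members of $\mathcal H$ in this order. ''Vertices $p_1,\dots,p_4$ in cyclic order'' means four distinct vertices met in this order when traversing $C$. A pair $H,H'$ of a family is an $axax$-pair if there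 are vertices $a_1,x_1,a_2,x_2$ in cyclic order with $a_1,a_2\in H\setminus H'$ and $x_1,x_2\in H'$; a family is $axax$-free if it has no $axax$-pair. *)

(* Defs.v *)
(* Cycle C on vertices 'I_n = {0,...,n-1}, clockwise = increasing mod n. *)
From mathcomp Require Import all_boot.
Set Implicit Arguments. Unset Strict Implicit. Unset Printing Implicit Defensive.

Section Defs.
Variable n : nat.

Definition cdist (i j : 'I_n) : nat := (j + n - i) %% n.

Definition arc (i j : 'I_n) : {set 'I_n} := [set k | cdist i k <= cdist i j].

Definition run_st (R : {set 'I_n}) (i j : 'I_n) : Prop :=
  R = arc i j /\ R != set0 /\ R != setT.

Definition is_run (R : {set 'I_n}) : Prop := exists i j, run_st R i j.

Definition strictly_contained (R R' : {set 'I_n}) : Prop :=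
  exists i j i' j', run_st R i j /\ run_st R' i' j' /\
    R \subset R' /\ 0 < cdist i' i /\ cdist i' j < cdist i' j'.

Definition sc_free (F : {set {set 'I_n}}) : Prop :=
  forall R R', R \in F -> R' \in F -> ~ strictly_contained R R'.

Definition cyc4 (p1 p2 p3 p4 : 'I_n) : bool :=
  [&& 0 < cdist p1 p2, cdist p1 p2 < cdist p1 p3 & cdist p1 p3 < cdist p1 p4].

Definition axax_pair (F G : {set 'I_n}) : Prop :=
  exists a1 x1 a2 x2, cyc4 a1 x1 a2 x2 /\ a1 \in F :\: G /\ a2 \in F :\: G /\
    x1 \in G /\ x2 \in G.

Definition axax_free (Fam : {set {set 'I_n}}) : Prop :=
  forall F G, F \in Fam -> G \in Fam -> ~ axax_pair F G.

(* R comes no later than R' in lex. cyclic order started at vertex v0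
   (ties between runs with equal keys broken arbitrarily) *)
Definition lex_le (v0 : 'I_n) (R R' : {set 'I_n}) : Prop :=
  exists i j i' j', run_st R i j /\ run_st R' i' j' /\
    (cdist v0 i < cdist v0 i' \/ (cdist v0 i = cdist v0 i' /\ cdist i j <= cdist i' j')).

(* hs lists the members of H (each once) in lex. cyclic order from v0;
   C(H) is the cycle hs_0 hs_1 ... hs_(m-1) hs_0 *)
Definition lex_cyclic_enum (H : {set {set 'I_n}}) (v0 : 'I_n) (hs : seq {set 'I_n}) : Prop :=
  uniq hs /\ (forall R, R \in hs = (R \in H)) /\
  (forall a b, a < b < size hs -> lex_le v0 (nth set0 hs a) (nth set0 hs b)).

Definition graph_on (H : {set {set 'I_n}}) (Q : rel {set 'I_n}) : Prop :=
  (forall x y, Q x y -> Q y x) /\ (forall x, ~~ Q x x) /\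
  (forall x y, Q x y -> x \in H /\ y \in H).

Definition contains_cycle (Q : rel {set 'I_n}) (hs : seq {set 'I_n}) : Prop :=
  forall a, a < size hs -> Q (nth set0 hs a) (nth set0 hs (a.+1 %% size hs)).

(* Outerplanar embedding with outer face bounded by the Hamiltonian cycle hs:
   combinatorially, no two edges of Q cross w.r.t. the cyclic order of hs. *)
Definition outerplanar_wrt (Q : rel {set 'I_n}) (hs : seq {set 'I_n}) : Prop :=
  forall a b c d, a < b -> b < c -> c < d -> d < size hs ->
    ~ (Q (nth set0 hs a) (nth set0 hs c) /\ Q (nth set0 hs b) (nth set0 hs d)).

Definition induces_connected (Q : rel {set 'I_n}) (S : {set {set 'I_n}}) : Prop :=
  forall x y, x \in S -> y \in S ->
    connect [rel u v | [&& Q u v, u \in S & v \in S]] x y.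

End Defs.

(* Main.v *)
Require Import Defs.
From Stdlib Require Import Classical.
From mathcomp Require Import all_boot zify.
Set Implicit Arguments. Unset Strict Implicit. Unset Printing Implicit Defensive.

Section Arith.
Variable n : nat.
Implicit Types a b i j p q : 'I_n.

Lemma cdist_raw a b : cdist a b = if a <= b then b - a else b + n - a.
Proof.
rewrite /cdist. have ha := ltn_ord a; have hb := ltn_ord b.
case: leqP => h.
- have -> : b + n - a = (b - a) + n by lia.
  rewrite modnDr modn_small //; lia.
- rewrite modn_small //; lia.
Qed.

Lemma cdist_cases a b :
  (a <= b /\ cdist a b = b - a) \/ (b < a /\ cdist a b = b + n - a).
Proof. rewrite cdist_raw; case: leqP => h; [left|right]; lia. Qed.

Lemma cdist_lt a b : cdist a b < n.
Proof. have := cdist_cases a b; have := ltn_ord a; have := ltn_ord b; lia. Qed.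

Variable v0 : 'I_n.

Lemma l_lt p : cdist v0 p < n.
Proof. exact: cdist_lt. Qed.

Lemma lcases a b :
  (cdist v0 a <= cdist v0 b /\ cdist a b = cdist v0 b - cdist v0 a) \/
  (cdist v0 b < cdist v0 a /\ cdist a b = cdist v0 b + n - cdist v0 a).
Proof.
have := cdist_cases a b; have := cdist_cases v0 a; have := cdist_cases v0 b.
have := ltn_ord a; have := ltn_ord b; have := ltn_ord v0. lia.
Qed.

Lemma run_L R i j : run_st R i j -> cdist i j + 2 <= n.
Proof.
move=> [-> [_ hT]]; rewrite leqNgt; apply/negP => h; move/negP: hT; apply.
apply/eqP/setP => k; rewrite !inE. have := cdist_lt i k. lia.
Qed.

Lemma run_uniq R i j i' j' : run_st R i j -> run_st R i' j' -> i = i' /\ j = j'.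
Proof.
move=> r1 r2. have L1 := run_L r1; have L2 := run_L r2.
case: r1 r2 => [e1 _] [e2 _].
have mem k : (cdist i k <= cdist i j) = (cdist i' k <= cdist i' j').
  by have := erefl (k \in R); rewrite {1}e1 e2 !inE.
have ii : i = i'.
  case: (eqVneq i i') => // hne; exfalso.
  have hn : 0 < n by have := ltn_ord i; lia.
  have hq : (if 0 < i' then i'.-1 else n.-1) < n.
    by have := ltn_ord i'; case: ifP; lia.
  pose q := Ordinal hq.
  have m1 := mem i'; have m2 := mem q.
  have hne' : (i : nat) <> i' by move=> h; move/eqP: hne; apply; apply: val_inj.
  have := cdist_cases i i'; have := cdist_cases i' i'; have := cdist_cases i' q;
  have := cdist_cases i q; have := ltn_ord i; have := ltn_ord i'.
  rewrite /= in m1 m2 *. move: m1 m2. case: ifP; lia.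
subst i'; split => //.
have m1 : cdist i j <= cdist i j' by rewrite -(mem j) leqnn.
have m2 : cdist i j' <= cdist i j by rewrite (mem j') leqnn.
have := cdist_cases i j; have := cdist_cases i j'; have := ltn_ord i.
have := ltn_ord j; have := ltn_ord j'.
move=> *; apply: ord_inj; lia.
Qed.

End Arith.

Section Pair.
Variable n : nat.
Variable v0 : 'I_n.
Variable H : {set {set 'I_n}}.
Hypothesis sc : sc_free H.
Local Notation l := (cdist v0).

Lemma pair_mono R R' i j i' j' : R \in H -> R' \in H ->
  run_st R i j -> run_st R' i' j' -> lex_le v0 R R' ->
  [/\ l i <= l i', l i + cdist i j <= l i' + cdist i' j' &
      l i' + cdist i' j' <= l i + cdist i j + n].
Proof.
move=> RH R'H r r' [i2 [j2 [i2' [j2' [r2 [r2' key]]]]]].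
case: (run_uniq r r2) => ? ?; case: (run_uniq r' r2') => ? ?; subst i2 j2 i2' j2'.
have L := run_L r; have L' := run_L r'.
have Ri : R = Defs.arc i j by case: r.
have R'i : R' = Defs.arc i' j' by case: r'.
have := l_lt v0 i; have := l_lt v0 i'.
move=> li li'.
split.
- lia.
- rewrite leqNgt; apply/negP => hlt.
  have lt : l i < l i' by lia.
  apply: (sc R'H RH); exists i', j', i, j; split => //; split => //; split.
    apply/subsetP => p; rewrite Ri R'i !inE => hp.
    have := lcases v0 i' p; have := lcases v0 i p; have := l_lt v0 p. lia.
  split.
    have := lcases v0 i i'. lia.
  have := lcases v0 i j'; have := lcases v0 i' j'; have := l_lt v0 j'. lia.
- rewrite leqNgt; apply/negP => hlt.
  apply: (sc RH R'H); exists i, j, i', j'; split => //; split => //; split.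
    apply/subsetP => p; rewrite Ri R'i !inE => hp.
    have := lcases v0 i' p; have := lcases v0 i p; have := l_lt v0 p. lia.
  split.
    have := lcases v0 i' i. lia.
  have := lcases v0 i' j; have := lcases v0 i j; have := l_lt v0 j. lia.
Qed.

End Pair.

Section Lift.
Variable n : nat.
Variable v0 : 'I_n.
Local Notation l := (cdist v0).

Lemma cyc4_lift (p1 p2 p3 p4 : 'I_n) z1 z2 z3 z4 :
  (z1 = l p1 \/ z1 = l p1 + n) ->
  (z2 = l p2 \/ z2 = l p2 + n \/ z2 = l p2 + n + n) ->
  (z3 = l p3 \/ z3 = l p3 + n \/ z3 = l p3 + n + n) ->
  (z4 = l p4 \/ z4 = l p4 + n \/ z4 = l p4 + n + n) ->
  z1 < z2 -> z2 < z3 -> z3 < z4 -> z4 < z1 + n -> cyc4 p1 p2 p3 p4.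
Proof.
move=> h1 h2 h3 h4 a b c d.
have := l_lt v0 p1; have := l_lt v0 p2; have := l_lt v0 p3; have := l_lt v0 p4.
move=> *.
have e2 : cdist p1 p2 = z2 - z1 by have := lcases v0 p1 p2; lia.
have e3 : cdist p1 p3 = z3 - z1 by have := lcases v0 p1 p3; lia.
have e4 : cdist p1 p4 = z4 - z1 by have := lcases v0 p1 p4; lia.
rewrite /cyc4 e2 e3 e4; apply/and3P; split; lia.
Qed.

Lemma mem_lift (p i j : 'I_n) : p \in Defs.arc i j ->
  exists z, (z = l p \/ z = l p + n) /\ l i <= z /\ z <= l i + cdist i j.
Proof.
rewrite inE => h. have := lcases v0 i p; have := l_lt v0 p; have := l_lt v0 i. move=> h0 h1 h2.
case: (leqP (l i) (l p)) => hh; [exists (l p) | exists (l p + n)].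

all: split; [by [left|right]|]; split.
all: lia.
Qed.

Lemma nmem_lift (p i j : 'I_n) : p \notin Defs.arc i j ->
  ~ (l i <= l p /\ l p <= l i + cdist i j) /\ ~ (l i <= l p + n /\ l p + n <= l i + cdist i j).
Proof.
rewrite inE -ltnNge => h. have := lcases v0 i p; have := l_lt v0 p; have := l_lt v0 i. lia.
Qed.

End Lift.

Lemma pick_pt (T : finType) (A B : {set T}) : A :&: B != set0 -> exists2 p, p \in A & p \in B.
Proof. by case/set0Pn => p; rewrite inE => /andP [] ; exists p. Qed.

Lemma nopt (T : finType) (A B : {set T}) p : A :&: B == set0 -> p \in B -> p \notin A.
Proof. move/eqP/setP/(_ p); rewrite !inE => e pB; apply/negP => pA; by rewrite pA pB in e. Qed.

Lemma nopt2 (T : finType) (A B : {set T}) p : A :&: B == set0 -> p \in A -> p \notin B.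
Proof. move/eqP/setP/(_ p); rewrite !inE => e pA; apply/negP => pB; by rewrite pA pB in e. Qed.

Section Core.
Variable n : nat.
Variable v0 : 'I_n.
Variables H K : {set {set 'I_n}}.
Hypothesis runs : forall R, R \in H -> is_run R.
Hypothesis sc : sc_free H.
Hypothesis axK : axax_free K.
Local Notation l := (cdist v0).

Lemma core1 R1 R2 R3 R4 X Y : R1 \in H -> R2 \in H -> R3 \in H -> R4 \in H ->
  lex_le v0 R1 R2 -> lex_le v0 R2 R3 -> lex_le v0 R3 R4 -> lex_le v0 R1 R4 ->
  X \in K -> Y \in K ->
  R1 :&: X != set0 -> R3 :&: X != set0 -> R1 :&: Y == set0 -> R3 :&: Y == set0 ->
  R2 :&: Y != set0 -> R4 :&: Y != set0 -> False.
Proof.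
move=> H1 H2 H3 H4 l12 l23 l34 l14 XK YK x1 x3 y1 y3 y2 y4.
have [i1 [j1 r1]] := runs H1; have [i2 [j2 r2]] := runs H2.
have [i3 [j3 r3]] := runs H3; have [i4 [j4 r4]] := runs H4.
have [m1 m2 m3] := pair_mono sc H1 H2 r1 r2 l12.
have [m4 m5 m6] := pair_mono sc H2 H3 r2 r3 l23.
have [m7 m8 m9] := pair_mono sc H3 H4 r3 r4 l34.
have [m10 m11 m12] := pair_mono sc H1 H4 r1 r4 l14.
have [p1 p1R p1X] := pick_pt x1; have [p3 p3R p3X] := pick_pt x3.
have [q2 q2R q2Y] := pick_pt y2; have [q4 q4R q4Y] := pick_pt y4.
have p1Y := nopt2 y1 p1R; have p3Y := nopt2 y3 p3R.
have n21 := nopt y1 q2Y; have n23 := nopt y3 q2Y.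
have n41 := nopt y1 q4Y; have n43 := nopt y3 q4Y.
case: r1 => e1 _; case: r2 => e2 _; case: r3 => e3 _; case: r4 => e4 _.
subst R1 R2 R3 R4.
have [z1 [hz1 z1b]] := mem_lift v0 p1R; have [z3 [hz3 z3b]] := mem_lift v0 p3R.
have [w2 [hw2 w2b]] := mem_lift v0 q2R; have [w4 [hw4 w4b]] := mem_lift v0 q4R.
have N21 := nmem_lift v0 n21; have N23 := nmem_lift v0 n23.
have N41 := nmem_lift v0 n41; have N43 := nmem_lift v0 n43.
have L1 := l_lt v0 q4.
have c1 : z1 < w2 by clear -z1b w2b hw2 N21 m1; lia.
have c2 : w2 < z3 by clear -w2b m5 N23 hw2 z3b; lia.
have c3 : z3 < w4 by clear -z3b w4b m7 N43 hw4; lia.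
have c4 : w4 < z1 + n by clear -w4b m12 hw4 N41 z1b L1; lia.
apply: (axK XK YK); exists p1, q2, p3, q4; split.
  clear -hz1 hw2 hz3 hw4 c1 c2 c3 c4.
  apply: (cyc4_lift (v0 := v0) (z1 := z1) (z2 := w2) (z3 := z3) (z4 := w4)) => //; lia.
by rewrite !inE p1X p3X p1Y p3Y q2Y q4Y.
Qed.

Lemma core2 R1 R2 R3 R4 X Y : R1 \in H -> R2 \in H -> R3 \in H -> R4 \in H ->
  lex_le v0 R1 R2 -> lex_le v0 R2 R3 -> lex_le v0 R3 R4 -> lex_le v0 R1 R4 ->
  X \in K -> Y \in K ->
  R2 :&: X != set0 -> R4 :&: X != set0 -> R2 :&: Y == set0 -> R4 :&: Y == set0 ->
  R1 :&: Y != set0 -> R3 :&: Y != set0 -> False.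
Proof.
move=> H1 H2 H3 H4 l12 l23 l34 l14 XK YK x2 x4 y2 y4 y1 y3.
have [i1 [j1 r1]] := runs H1; have [i2 [j2 r2]] := runs H2.
have [i3 [j3 r3]] := runs H3; have [i4 [j4 r4]] := runs H4.
have [m1 m2 m3] := pair_mono sc H1 H2 r1 r2 l12.
have [m4 m5 m6] := pair_mono sc H2 H3 r2 r3 l23.
have [m7 m8 m9] := pair_mono sc H3 H4 r3 r4 l34.
have [m10 m11 m12] := pair_mono sc H1 H4 r1 r4 l14.
have LL1 := run_L r1; have LL4 := run_L r4.
have [p2 p2R p2X] := pick_pt x2; have [p4 p4R p4X] := pick_pt x4.
have [q1 q1R q1Y] := pick_pt y1; have [q3 q3R q3Y] := pick_pt y3.
have p2Y := nopt2 y2 p2R; have p4Y := nopt2 y4 p4R.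
have n12 := nopt y2 q1Y; have n14 := nopt y4 q1Y.
have n32 := nopt y2 q3Y; have n34 := nopt y4 q3Y.
case: r1 => e1 _; case: r2 => e2 _; case: r3 => e3 _; case: r4 => e4 _.
subst R1 R2 R3 R4.
have [z2 [hz2 z2b]] := mem_lift v0 p2R; have [z4 [hz4 z4b]] := mem_lift v0 p4R.
have [w1 [hw1 w1b]] := mem_lift v0 q1R; have [w3 [hw3 w3b]] := mem_lift v0 q3R.
have N12 := nmem_lift v0 n12; have N14 := nmem_lift v0 n14.
have N32 := nmem_lift v0 n32; have N34 := nmem_lift v0 n34.
have L1 := l_lt v0 q1; have L4 := l_lt v0 i4.
have c1 : w1 < z2 by clear -w1b m2 N12 hw1 z2b; lia.
have c2 : z2 < w3 by clear -z2b w3b m4 N32 hw3; lia.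
have c3 : w3 < z4 by clear -w3b m8 N34 hw3 z4b; lia.
have c4 : z4 < w1 + n by clear -z4b hw1 N14 w1b L4 LL4 L1; lia.
apply: (axK XK YK); exists p2, q3, p4, q1; split.
  clear -hz2 hw3 hz4 hw1 c1 c2 c3 c4.
  have := l_lt v0 q3; have := l_lt v0 p4; have := l_lt v0 q1; have := l_lt v0 p2; move=> ? ? ? ?.
  case: hz2 => hz2.
    apply: (cyc4_lift (v0 := v0) (z1 := z2) (z2 := w3) (z3 := z4) (z4 := w1 + n)) => //; lia.
  apply: (cyc4_lift (v0 := v0) (z1 := z2 - n) (z2 := w3 - n) (z3 := z4 - n) (z4 := w1)); lia.
by rewrite !inE p2X p4X p2Y p4Y q1Y q3Y.
Qed.

End Core.

Section Poly.
Variable m : nat.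
Variable F : {set 'I_m} -> Prop.
Hypothesis AX1 : forall S S', F S -> F S' -> forall a b c d : 'I_m,
  a < b -> b < c -> c < d -> a \in S -> a \notin S' -> c \in S -> c \notin S' ->
  b \in S' -> d \in S' -> False.
Hypothesis AX2 : forall S S', F S -> F S' -> forall a b c d : 'I_m,
  a < b -> b < c -> c < d -> b \in S -> b \notin S' -> d \in S -> d \notin S' ->
  a \in S' -> c \in S' -> False.

Definition restr (E : rel 'I_m) (A : {set 'I_m}) : rel 'I_m :=
  [rel u v | [&& E u v, u \in A & v \in A]].

Definition pgood (P : {set 'I_m}) (E : rel 'I_m) : Prop :=
 [/\ (forall x y, E x y -> E y x),
     (forall x y, E x y -> [&& x \in P, y \in P & x != y]),
     (forall x y, x \in P -> y \in P -> x < y ->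
        ((forall z, z \in P -> ~~ ((x < z) && (z < y))) \/
         (forall z, z \in P -> (x <= z) && (z <= y))) -> E x y),
     (forall a b c d : 'I_m, a < b -> b < c -> c < d -> ~~ (E a c && E b d)) &
     (forall S, F S -> forall x y, x \in S :&: P -> y \in S :&: P ->
        connect (restr E (S :&: P)) x y)].

Lemma ltn_neq (a b : 'I_m) : a < b -> a != b.
Proof. by move=> h; apply/eqP => e; rewrite e ltnn in h. Qed.

Lemma card4 (P : {set 'I_m}) (a b c d : 'I_m) : a < b -> b < c -> c < d ->
  a \in P -> b \in P -> c \in P -> d \in P -> 4 <= #|P|.
Proof.
move=> ab bc cd aP bP cP dP.
rewrite cardE; apply: (uniq_leq_size (s1 := [:: a; b; c; d])).
  rewrite /= !inE !negb_or -!val_eqE /=; apply/and4P; split; try apply/and3P; try split;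
  try apply/andP; try split; apply/eqP; lia.
by move=> x; rewrite !inE => /or4P [] /eqP ->; rewrite mem_enum.
Qed.

Lemma base (P : {set 'I_m}) : #|P| <= 3 -> exists E, pgood P E.
Proof.
move=> hP; exists [rel x y | [&& x \in P, y \in P & x != y]]; split.
- by move=> x y /and3P [a b c]; rewrite /= a b eq_sym c.
- by [].
- by move=> x y xP yP xy _; rewrite /= xP yP ltn_neq.
- move=> a b c d ab bc cd; apply/negP => /andP [/and3P [aP cP _] /and3P [bP dP _]].
  have := card4 ab bc cd aP bP cP dP; lia.
- move=> S _ x y xS yS; case: (eqVneq x y) => [-> | ne]; first exact: connect0.
  apply: connect1; rewrite /restr /= xS yS ne !andbT.
  by move: xS yS; rewrite !inE => /andP [_ ->] /andP [_ ->].
Qed.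


Lemma restr_mono (E E' : rel 'I_m) (A A' : {set 'I_m}) x y :
  (forall u v, E u v -> E' u v) -> A \subset A' ->
  connect (restr E A) x y -> connect (restr E' A') x y.
Proof.
move=> hE hA; apply: connect_sub => u v /and3P [e uA vA]; apply: connect1.
by rewrite /restr /= hE // (subsetP hA _ uA) (subsetP hA _ vA).
Qed.

Lemma split_step (P : {set 'I_m}) (a b : 'I_m) (E1 E2 : rel 'I_m) : a \in P -> b \in P -> a < b ->
  (forall S, F S -> (exists2 x, x \in S :&: P & (a < x) && (x < b)) ->
     (exists2 y, y \in S :&: P & (y < a) || (b < y)) -> (a \in S) || (b \in S)) ->
  pgood (P :&: [set x : 'I_m | (a <= x) && (x <= b)]) E1 ->
  pgood (P :&: [set x : 'I_m | (x <= a) || (b <= x)]) E2 ->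
  pgood P [rel x y | E1 x y || E2 x y].
Proof.
set P1 := P :&: [set x : 'I_m | _]; set P2 := P :&: [set x : 'I_m | _].
move=> aP bP ab good [s1 i1 c1 n1 k1] [s2 i2 c2 n2 k2].
have inP1 x : (x \in P1) = (x \in P) && ((a <= x) && (x <= b)) by rewrite !inE.
have inP2 x : (x \in P2) = (x \in P) && ((x <= a) || (b <= x)) by rewrite !inE.
split.
- by move=> x y /=; case/orP => [/s1 | /s2] ->; rewrite ?orbT.
- move=> x y /=; case/orP => [/i1 | /i2]; rewrite ?inP1 ?inP2 => /and3P [/andP [-> _] /andP [-> _] ->] //.
- move=> x y xP yP xy [hn | ha] /=.
  + have hna := hn a aP; have hnb := hn b bP.
    case: (boolP ((a <= x) && (y <= b))) => hxy.
      apply/orP; left; apply: c1 => //; rewrite ?inP1 ?xP ?yP /=.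
      * by move: hxy xy; clear; lia.
      * by move: hxy xy; clear; lia.
      left => z; rewrite inP1 => /andP [zP _]; exact: hn.
    apply/orP; right; apply: c2 => //; rewrite ?inP2 ?xP ?yP /=.
    * by move: hxy hna hnb xy; clear; lia.
    * by move: hxy hna hnb xy; clear; lia.
    left => z; rewrite inP2 => /andP [zP _]; exact: hn.
  + have hxa := ha a aP; have hxb := ha b bP.
    apply/orP; right; apply: c2 => //; rewrite ?inP2 ?xP ?yP /=.
    * by move: hxa; clear; lia.
    * by move: hxb; clear; lia.
    right => z; rewrite inP2 => /andP [zP _]; exact: ha.
- move=> x y z w xy yz zw; apply/negP => /= /andP [/orP [e1 | e2] /orP [f1 | f2]].
  + by move/negP: (n1 _ _ _ _ xy yz zw); apply; rewrite e1 f1.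
  + move: (i1 _ _ e1) (i2 _ _ f2); rewrite !inP1 !inP2 => /and3P [/andP [_ h1] /andP [_ h2] _] /and3P [/andP [_ h3] _ _].
    by move: h1 h2 h3 xy yz; clear; lia.
  + move: (i2 _ _ e2) (i1 _ _ f1); rewrite !inP1 !inP2 => /and3P [_ /andP [_ h3] _] /and3P [/andP [_ h1] /andP [_ h2] _].
    by move: h1 h2 h3 yz zw; clear; lia.
  + by move/negP: (n2 _ _ _ _ xy yz zw); apply; rewrite e2 f2.
- have sub1 S : S :&: P1 \subset S :&: P by apply/subsetP => u; rewrite !inE => /andP [-> /andP [->]].
  have sub2 S : S :&: P2 \subset S :&: P by apply/subsetP => u; rewrite !inE => /andP [-> /andP [->]].
  have m1 S u v : connect (restr E1 (S :&: P1)) u v -> connect (restr [rel x y | E1 x y || E2 x y] (S :&: P)) u v.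
    by apply: restr_mono => // p q /= ->.
  have m2 S u v : connect (restr E2 (S :&: P2)) u v -> connect (restr [rel x y | E1 x y || E2 x y] (S :&: P)) u v.
    by apply: restr_mono => // p q /= ->; rewrite orbT.
  move=> S FS x y.
  rewrite !inE => /andP [xS xP] /andP [yS yP].
  have SP1 u : u \in S -> u \in P -> (a <= u) && (u <= b) -> u \in S :&: P1 by move=> *; rewrite !inE; apply/and3P.
  have SP2 u : u \in S -> u \in P -> (u <= a) || (b <= u) -> u \in S :&: P2 by move=> *; rewrite !inE; apply/and3P.
  have SPi u : u \in S -> u \in P -> u \in S :&: P by move=> *; rewrite !inE; apply/andP.
  have cross u v : u \in S -> u \in P -> v \in S -> v \in P -> (a < u) && (u < b) -> (v < a) || (b < v) ->
      connect (restr [rel x y | E1 x y || E2 x y] (S :&: P)) u v.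
    move=> uS uP vS vP hu hv.
    have : (a \in S) || (b \in S).
      by apply: good => //; [exists u | exists v] => //; apply: SPi.
    case/orP => zS.
      apply: (connect_trans (y := a)); [apply: m1; apply: k1 | apply: m2; apply: k2] => //.
      * by apply: SP1 => //; move: hu; clear; lia.
      * by apply: SP1 => //; move: ab; clear; lia.
      * by apply: SP2 => //; rewrite leqnn.
      * by apply: SP2 => //; move: hv; clear; lia.
    apply: (connect_trans (y := b)); [apply: m1; apply: k1 | apply: m2; apply: k2] => //.
    * by apply: SP1 => //; move: hu; clear; lia.
    * by apply: SP1 => //; move: ab; clear; lia.
    * by apply: SP2 => //; rewrite leqnn orbT.
    * by apply: SP2 => //; move: hv; clear; lia.
  have connS : forall u v, connect (restr [rel x y | E1 x y || E2 x y] (S :&: P)) u v ->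
     connect (restr [rel x y | E1 x y || E2 x y] (S :&: P)) v u.
    have sy : symmetric (restr [rel x y | E1 x y || E2 x y] (S :&: P)).
      have h p q : restr [rel x y | E1 x y || E2 x y] (S :&: P) p q ->
                   restr [rel x y | E1 x y || E2 x y] (S :&: P) q p.
        move=> /and3P [e pS qS]; rewrite /restr /= pS qS andbT.
        by case/orP: e => [/s1 | /s2] ->; rewrite ?orbT.
      by move=> p q; apply/idP/idP; apply: h.
    by move=> u v; rewrite (sym_connect_sym sy).
  case: (boolP ((a <= x) && (x <= b))) => x1; case: (boolP ((a <= y) && (y <= b))) => y1.
  + by apply: m1; apply: k1 => //; [apply: SP1 | apply: SP1].
  + case: (boolP ((x <= a) || (b <= x))) => x2.
      apply: m2; apply: k2 => //; apply: SP2 => //; by move: y1; clear; lia.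
    by apply: cross => //; move: x1 x2 y1; clear; lia.
  + case: (boolP ((y <= a) || (b <= y))) => y2.
      apply: m2; apply: k2 => //; apply: SP2 => //; by move: x1; clear; lia.
    by apply: connS; apply: cross => //; move: x1 y1 y2; clear; lia.
  + apply: m2; apply: k2 => //; [apply: SP2 | apply: SP2] => //.
    by move: x1; clear; lia. by move: y1; clear; lia.
Qed.

Lemma ex_min (A : {set 'I_m}) x0 : x0 \in A -> exists2 x, x \in A & forall y, y \in A -> x <= y.
Proof.
move=> h; case: (@arg_minnP _ x0 (fun x => x \in A) (fun x : 'I_m => nat_of_ord x) h) => x xA hm.
by exists x => // y /hm.
Qed.

Lemma ex_of_card (A : {set 'I_m}) : 0 < #|A| -> exists x, x \in A.
Proof. by rewrite card_gt0 => /set0Pn. Qed.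

Lemma split_card (P : {set 'I_m}) (Q : pred 'I_m) w : w \in P -> ~~ Q w ->
  #|P :&: [set x | Q x]| < #|P|.
Proof.
move=> wP nQ; apply: proper_card; apply/properP; split.
  by apply/subsetP => u; rewrite inE => /andP [].
by exists w => //; rewrite !inE (negbTE nQ) andbF.
Qed.

Lemma poly_all (P : {set 'I_m}) : exists E, pgood P E.
Proof.
move: {2}#|P| (leqnn #|P|) => k. elim: k P => [|k IH] P hP.
  by apply: base; lia.
case: (leqP #|P| 3) => h3; first exact: base.
have IH' (Q : {set 'I_m}) : #|Q| < #|P| -> exists E, pgood Q E by move=> hQ; apply: IH; lia.
have [x0 x0P] := ex_of_card (ltnW (ltnW (ltnW h3))).
have [p0 p0P min0] := ex_min x0P.
have c1 : 2 < #|P :\ p0| by move: h3; rewrite (cardsD1 p0) p0P; lia.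
have [x1 x1P] := ex_of_card (ltnW (ltnW c1)).
have [p1 p1P min1] := ex_min x1P.
have c2 : 1 < #|P :\ p0 :\ p1| by move: c1; rewrite (cardsD1 p1 (P :\ p0)) p1P; lia.
have [x2 x2P] := ex_of_card (ltnW c2).
have [p2 p2P min2] := ex_min x2P.
have c3 : 0 < #|P :\ p0 :\ p1 :\ p2| by move: c2; rewrite (cardsD1 p2 (P :\ p0 :\ p1)) p2P; lia.
have [p3 p3P] := ex_of_card c3.
move: p1P p2P p3P; rewrite !inE => /andP [n10 p1P] /and3P [n21 n20 p2P] /and4P [n32 n31 n30 p3P].
have o01 : p0 < p1.
  have h := min0 _ p1P; move: n10; rewrite -val_eqE /= => n10; clear -h n10; lia.
have o12 : p1 < p2.
  have := min1 p2; rewrite !inE n20 p2P => /(_ isT) h; move: n21; rewrite -val_eqE /= => n21; clear -h n21; lia.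
have o23 : p2 < p3.
  have := min2 p3; rewrite !inE n31 n30 p3P => /(_ isT) h; move: n32; rewrite -val_eqE /= => n32; clear -h n32; lia.
have below x : x \in P -> x < p2 -> (x == p0) || (x == p1).
  move=> xP xl; apply/negPn/negP; rewrite negb_or => /andP [a b].
  by have := min2 x; rewrite !inE a b xP => /(_ isT); move: xl; clear; lia.
case: (classic (exists S, [/\ F S, p1 \in S, p0 \notin S, p2 \notin S &
                               exists2 y, y \in S :&: P & p2 < y])) => [[S [FS p1S p0S p2S [y yS yl]]] | nB].
-
  have yA : y \in [set z in S :&: P | p2 < z] by rewrite inE yS.
  have [v vA minv] := ex_min yA.
  move: vA; rewrite !inE => /andP [/andP [vS vP] p2v].
  have [E1 g1] := IH' (P :&: [set x : 'I_m | (p1 <= x) && (x <= v)])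
     (@split_card P (fun x : 'I_m => (p1 <= x) && (x <= v)) p0 p0P ltac:(by move: o01; clear; lia)).
  have [E2 g2] := IH' (P :&: [set x : 'I_m | (x <= p1) || (v <= x)])
     (@split_card P (fun x : 'I_m => (x <= p1) || (v <= x)) p2 p2P ltac:(by move: o12 p2v; clear; lia)).
  exists [rel x y | E1 x y || E2 x y]; apply: split_step g1 g2 => //.
    by move: o12 p2v; clear; lia.
  move=> S' FS' [x xS' xb] [z zS' zb].
  move: xS' zS'; rewrite !inE => /andP [xS' xP] /andP [zS' zP].
  have xS : x \notin S.
    apply/negP => xS.
    case: (ltngtP x p2) => hx.
    + by move: (below x xP hx); rewrite -!val_eqE /=; move: xb o01; clear; lia.
    + by have := minv x; rewrite !inE xS xP hx => /(_ isT); move: xb; clear; lia.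
    + have e : x = p2 by apply: ord_inj.
      by move: xS; rewrite e (negbTE p2S).
  apply/negPn/negP; rewrite negb_or => /andP [n1 n2].
  move/andP: xb => [xb1 xb2].
  case zSS: (z \in S).
  + case/orP: zb => zl.
    * exact: (AX2 FS FS' zl xb1 xb2 p1S n1 vS n2 zS' xS').
    * exact: (AX1 FS FS' xb1 xb2 zl p1S n1 vS n2 xS' zS').
  + have zS : z \notin S by rewrite zSS.
    case/orP: zb => zl.
    * exact: (AX1 FS' FS zl xb1 xb2 zS' zS xS' xS p1S vS).
    * exact: (AX2 FS' FS xb1 xb2 zl xS' xS zS' zS p1S vS).
-
  have [E1 g1] := IH' (P :&: [set x : 'I_m | (p0 <= x) && (x <= p2)])
     (@split_card P (fun x : 'I_m => (p0 <= x) && (x <= p2)) p3 p3P ltac:(by move: o23; clear; lia)).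
  have [E2 g2] := IH' (P :&: [set x : 'I_m | (x <= p0) || (p2 <= x)])
     (@split_card P (fun x : 'I_m => (x <= p0) || (p2 <= x)) p1 p1P ltac:(by move: o01 o12; clear; lia)).
  exists [rel x y | E1 x y || E2 x y]; apply: split_step g1 g2 => //.
    by move: o01 o12; clear; lia.
  move=> S FS [x xS xb] [z zS zb].
  move: xS zS; rewrite !inE => /andP [xS xP] /andP [zS zP].
  have ex1 : x = p1.
    move/andP: xb => [xb1 xb2].
    case/orP: (below x xP xb2) => /eqP e //.
    by move: xb1; rewrite e ltnn.
  case p0S: (p0 \in S) => //; case p2S: (p2 \in S) => //.
  exfalso; apply: nB; exists S; split => //; [by rewrite -ex1 | by rewrite p0S | by rewrite p2S |].
  exists z; first by rewrite !inE zS zP.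
  by have := min0 z zP; move: zb; clear; lia.
Qed.

End Poly.

Lemma connect_img (T T' : finType) (e : rel T) (e' : rel T') (f : T -> T') :
  (forall x y, e x y -> e' (f x) (f y)) -> forall x y, connect e x y -> connect e' (f x) (f y).
Proof.
move=> h x y /connectP [p pth ->]; elim: p x pth => [|z p IH] x /=; first by rewrite connect0.
case/andP => exz pth; exact: connect_trans (connect1 (h _ _ exz)) (IH _ pth).
Qed.

Theorem mainTheorem15 (n : nat) (H K : {set {set 'I_n}}) :
  2 < #|H| ->
  (forall R, R \in H -> is_run R) ->
  sc_free H ->
  axax_free H -> axax_free K ->
  forall (v0 : 'I_n) (hs : seq {set 'I_n}), lex_cyclic_enum H v0 hs ->
  exists Q : rel {set 'I_n},
    [/\ graph_on H Q, contains_cycle Q hs, outerplanar_wrt Q hs &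
        forall X, X \in K -> induces_connected Q [set R in H | R :&: X != set0]].
Proof.
move=> hH runs sc _ axK v0 hs [uq [memhs lex]].
have sz : #|H| = size hs.
  rewrite -(card_uniqP uq); apply: eq_card => R; by rewrite memhs.
set m := size hs.
have m3 : 2 < m by rewrite /m -sz.
pose f (i : 'I_m) := nth set0 hs i.
have fH (i : 'I_m) : f i \in H by rewrite -memhs mem_nth.
have finj (i j : 'I_m) : f i = f j -> i = j.
  move=> e; apply: ord_inj; apply/eqP; rewrite -(nth_uniq set0 (ltn_ord i) (ltn_ord j) uq).
  by apply/eqP.
have flex (i j : 'I_m) : i < j -> lex_le v0 (f i) (f j).
  by move=> ij; apply: lex; rewrite ij ltn_ord.
pose PX (X : {set 'I_n}) := [set i : 'I_m | f i :&: X != set0].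
pose F (S : {set 'I_m}) := exists2 X, X \in K & S = PX X.
have AX1 : forall S S', F S -> F S' -> forall a b c d : 'I_m,
  a < b -> b < c -> c < d -> a \in S -> a \notin S' -> c \in S -> c \notin S' ->
  b \in S' -> d \in S' -> False.
  move=> S S' [X XK ->] [Y YK ->] a b c d ab bc cd; rewrite !inE => aX /negbNE aY cX /negbNE cY bY dY.
  apply: (core1 runs sc axK (fH a) (fH b) (fH c) (fH d) (flex _ _ ab) (flex _ _ bc)
           (flex _ _ cd) (flex _ _ (ltn_trans ab (ltn_trans bc cd))) XK YK) => //.
have AX2 : forall S S', F S -> F S' -> forall a b c d : 'I_m,
  a < b -> b < c -> c < d -> b \in S -> b \notin S' -> d \in S -> d \notin S' ->
  a \in S' -> c \in S' -> False.
  move=> S S' [X XK ->] [Y YK ->] a b c d ab bc cd; rewrite !inE => bX /negbNE bY dX /negbNE dY aY cY.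
  apply: (core2 runs sc axK (fH a) (fH b) (fH c) (fH d) (flex _ _ ab) (flex _ _ bc)
           (flex _ _ cd) (flex _ _ (ltn_trans ab (ltn_trans bc cd))) XK YK) => //.
have [E [Esym Ein Ecyc Enc Econn]] := poly_all AX1 AX2 setT.
pose Q := [rel R R' | [exists i : 'I_m, exists j : 'I_m, [&& f i == R, f j == R' & E i j]]].
have QP R R' : reflect (exists i j, [/\ f i = R, f j = R' & E i j]) (Q R R').
  apply: (iffP existsP) => [[i /existsP [j /and3P [/eqP a /eqP b c]]] | [i [j [a b c]]]].
    by exists i, j.
  by exists i; apply/existsP; exists j; rewrite a b c !eqxx.
exists Q; split.
- split; [|split].
  + move=> x y /QP [i [j [a b c]]]; apply/QP; exists j, i; split => //; exact: Esym.
  + move=> x; apply/negP => /QP [i [j [a b c]]].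
    have ij : i = j by apply: finj; rewrite a b.
    by move: (Ein _ _ c); rewrite ij eqxx !andbF.
  + by move=> x y /QP [i [j [<- <- _]]]; rewrite !fH.
- move=> a ha.
  have m0 : 0 < m by lia.
  apply/QP; exists (Ordinal ha), (Ordinal (ltn_pmod a.+1 m0)); split => //.
  case: (ltnP a.+1 m) => h.
    have e : a.+1 %% m = a.+1 by rewrite modn_small.
    apply: Ecyc; rewrite ?inE //=; first by rewrite e.
    left => z _; rewrite e; apply/negP => /andP [z1 z2]; move: z1 z2; clear; lia.
  have e : a.+1 %% m = 0.
    have -> : a.+1 = m by move: h ha; clear; lia.
    by rewrite modnn.
  apply: Esym; apply: Ecyc; rewrite ?inE //=; first by rewrite e; lia.
  right => z _; rewrite e /=; have := ltn_ord z; clear -h ha; lia.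
- move=> a b c d ab bc cd dl [/QP [i [j [ei ej eij]]] /QP [k [l [ek el ekl]]]].
  have mem_a : a < m by lia.
  have mem_b : b < m by lia.
  have mem_c : c < m by lia.
  have ia : (i : nat) = a.
    by apply/eqP; rewrite -(nth_uniq set0 (ltn_ord i) mem_a uq); apply/eqP.
  have jc : (j : nat) = c.
    by apply/eqP; rewrite -(nth_uniq set0 (ltn_ord j) mem_c uq); apply/eqP.
  have kb : (k : nat) = b.
    by apply/eqP; rewrite -(nth_uniq set0 (ltn_ord k) mem_b uq); apply/eqP.
  have ld : (l : nat) = d.
    by apply/eqP; rewrite -(nth_uniq set0 (ltn_ord l) dl uq); apply/eqP.
  have : ~~ (E i j && E k l) by apply: Enc; move: ia kb jc ld ab bc cd; clear; lia.
  by rewrite eij ekl.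
- move=> X XK x y; rewrite !inE => /andP [xH xX] /andP [yH yX].
  have xs : x \in hs by rewrite memhs.
  have ys : y \in hs by rewrite memhs.
  pose ix := Ordinal (etrans (index_mem x hs) xs).
  pose iy := Ordinal (etrans (index_mem y hs) ys).
  have fx : f ix = x by rewrite /f /= nth_index.
  have fy : f iy = y by rewrite /f /= nth_index.
  have FX : F (PX X) by exists X.
  have := Econn _ FX ix iy; rewrite !inE fx fy xX yX => /(_ isT isT).
  rewrite -fx -fy; apply: connect_img => p q /and3P [epq pP qP].
  move: pP qP; rewrite !inE !andbT => pX qX.
  rewrite /= !inE fH pX fH qX !andbT.
  apply/QP; by exists p, q.
Qed.
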